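(* The category $\mathbf{USppQu}$ of unitally supported quantales is a full and reflective subcategory of $\mathbf{SppUQu}$. For each object $(Q,\varsigma)$ of $\mathbf{SppUQu}$ the reflection $\eta:(Q,\varsigma)\to(Q,\varsigma_e)$ is obtained by defining the unital support $\varsigma_e(x)=\varsigma(x)\triangleright e$ for all $x\in Q$ and setting $\eta_1=\mathrm{id}_Q$ and $\eta_0(a)=a\triangleright e$ for all $a\in Q_0$.
   Context: For a locale $A$, an $A$-$A$-bimodule is a sup-lattice $M$ with actions $a\triangleright m$, $m\triangleleft a$ preserving joins in each variable, with $1_A\triangleright m=m$, $(a\wedge b)\triangleright m=a\triangleright(b\triangleright m)$, $m\triangleleft1_A=m$, $m\triangleleft(a\wedge b)=(m\triangleleft a)\triangleleft b$, $(a\triangleright m)\triangleleft b=a\triangleright(m\triangleleft b)$. An $A$-$A$-quantale is such a $Q$ with associative join-preserving multiplication and $(a\triangleright x)y=a\triangleright(xy)$, $(x\triangleleft a)y=x(a\triangleright y)$, $(xy)\triangleleft a=x(y\triangleleft a)$; involutive if there is a join-preserving $x\mapsto x^*$ with $x^{**}=x$, $(xy)^*=y^*x^*$, $(a\triangleright(x\triangleleft b))^*=b\triangleright(x^*\triangleleft a)$. A based quantale is an involutive $Q_0$-$Q_0$-quantale for a locale $Q_0$; a support is a join-preserving $\varsigma:Q\to Q_0$ with $\varsigma(1_Q)=1_{Q_0}$, $\varsigma(x)\triangleright y\le xx^*y$, $\varsigma(x)\triangleright x=x$. A morphism of supported quantales $f:Q\to R$ is a pair $(f_1,f_0)$, $f_1$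 a homomorphism of involutive quantales, $f_0:Q_0\to R_0$ a frame homomorphism, with $f_1(a\triangleright x)=f_0(a)\triangleright f_1(x)$, $f_1(x\triangleleft a)=f_1(x)\triangleleft f_0(a)$ and $f_0\circ\varsigma_Q=\varsigma_R\circ f_1$. $\mathbf{SppUQu}$: supported quantales whose quantale $Q$ has a multiplicative unit $e$, with morphisms such that $f_1$ preserves the unit. A unital support on a unital involutive quantale $Q$ is a join-preserving $\varsigma:Q\to Q$ with $\varsigma(x)\le e$, $\varsigma(x)\le xx^*$, $x\le\varsigma(x)x$; $\mathbf{USppQu}$ has these as objects and unital involutive quantale homomorphisms commuting with supports as morphisms. $\mathbf{USppQu}$ is identified with a subcategory of $\mathbf{SppUQu}$ by regarding $(Q,\varsigma)$ as a based quantale with $Q_0={\downarrow}e$ and actions $a\triangleright x=ax$, $x\triangleleft a=xa$, and a morphism $f$ as $(f,f|_{{\downarrow}e})$. *)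

(* Defs.v *)
From Stdlib Require Import ClassicalEpsilon ProofIrrelevance.
Set Implicit Arguments.

Record SupLat := {
  sl_car :> Type;
  sl_le : sl_car -> sl_car -> Prop;
  sl_sup : (sl_car -> Prop) -> sl_car;
  sl_refl : forall x, sl_le x x;
  sl_trans : forall x y z, sl_le x y -> sl_le y z -> sl_le x z;
  sl_antisym : forall x y, sl_le x y -> sl_le y x -> x = y;
  sl_sup_ub : forall S x, S x -> sl_le x (sl_sup S);
  sl_sup_least : forall S y, (forall x, S x -> sl_le x y) -> sl_le (sl_sup S) y }.

Arguments sl_le {s} _ _.
Arguments sl_sup {s} _.

Definition image {A B : Type} (f : A -> B) (S : A -> Prop) : B -> Prop :=
  fun y => exists x, S x /\ y = f x.

Definition joinpres {L M : SupLat} (f : L -> M) : Prop :=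
  forall S : L -> Prop, f (sl_sup S) = sl_sup (image f S).

Definition meet {L : SupLat} (a b : L) : L :=
  sl_sup (fun c => sl_le c a /\ sl_le c b).
Definition top (L : SupLat) : L := sl_sup (fun _ => True).

Definition is_frame (L : SupLat) : Prop :=
  forall (a : L) (S : L -> Prop), meet a (sl_sup S) = sl_sup (image (meet a) S).

Definition frame_hom {L M : SupLat} (f : L -> M) : Prop :=
  joinpres f /\ (forall a b, f (meet a b) = meet (f a) (f b)) /\ f (top L) = top M.

Record SQ := {
  sq_Q : SupLat;
  sq_Q0 : SupLat;
  sq_lact : sq_Q0 -> sq_Q -> sq_Q;      (* a |> x *)
  sq_ract : sq_Q -> sq_Q0 -> sq_Q;
  sq_mul : sq_Q -> sq_Q -> sq_Q;
  sq_inv : sq_Q -> sq_Q;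
  sq_supp : sq_Q -> sq_Q0;
  sq_e : sq_Q }.

(** ... and axioms: supported quantale with a multiplicative unit *)
Record is_SppUQu (A : SQ) : Prop := {
  spp_frame : is_frame (sq_Q0 A);
  spp_lact_jr : forall a, joinpres (sq_lact A a);
  spp_lact_jl : forall x, joinpres (fun a => sq_lact A a x);
  spp_ract_jl : forall a, joinpres (fun x => sq_ract A x a);
  spp_ract_jr : forall x, joinpres (sq_ract A x);
  spp_lact_top : forall x, sq_lact A (top (sq_Q0 A)) x = x;
  spp_lact_meet : forall a b x, sq_lact A (meet a b) x = sq_lact A a (sq_lact A b x);
  spp_ract_top : forall x, sq_ract A x (top (sq_Q0 A)) = x;
  spp_ract_meet : forall a b x, sq_ract A x (meet a b) = sq_ract A (sq_ract A x a) b;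
  spp_lr : forall a b x, sq_ract A (sq_lact A a x) b = sq_lact A a (sq_ract A x b);
  spp_assoc : forall x y z, sq_mul A x (sq_mul A y z) = sq_mul A (sq_mul A x y) z;
  spp_mul_jr : forall x, joinpres (sq_mul A x);
  spp_mul_jl : forall y, joinpres (fun x => sq_mul A x y);
  spp_lact_mul : forall a x y, sq_mul A (sq_lact A a x) y = sq_lact A a (sq_mul A x y);
  spp_ract_mul : forall a x y, sq_mul A (sq_ract A x a) y = sq_mul A x (sq_lact A a y);
  spp_mul_ract : forall a x y, sq_ract A (sq_mul A x y) a = sq_mul A x (sq_ract A y a);
  spp_inv_j : joinpres (sq_inv A);
  spp_inv_inv : forall x, sq_inv A (sq_inv A x) = x;
  spp_inv_mul : forall x y, sq_inv A (sq_mul A x y) = sq_mul A (sq_inv A y) (sq_inv A x);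
  spp_inv_act : forall a b x,
    sq_inv A (sq_lact A a (sq_ract A x b)) = sq_lact A b (sq_ract A (sq_inv A x) a);
  spp_supp_j : joinpres (sq_supp A);
  spp_supp_top : sq_supp A (top (sq_Q A)) = top (sq_Q0 A);
  spp_supp_le : forall x y,
    sl_le (sq_lact A (sq_supp A x) y) (sq_mul A (sq_mul A x (sq_inv A x)) y);
  spp_supp_act : forall x, sq_lact A (sq_supp A x) x = x;
  spp_unit_l : forall x, sq_mul A (sq_e A) x = x;
  spp_unit_r : forall x, sq_mul A x (sq_e A) = x }.

Record SppUQu_mor (A B : SQ) (f1 : sq_Q A -> sq_Q B) (f0 : sq_Q0 A -> sq_Q0 B) : Prop := {
  sm_j : joinpres f1;
  sm_mul : forall x y, f1 (sq_mul A x y) = sq_mul B (f1 x) (f1 y);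
  sm_inv : forall x, f1 (sq_inv A x) = sq_inv B (f1 x);
  sm_unit : f1 (sq_e A) = sq_e B;
  sm_frame : frame_hom f0;
  sm_lact : forall a x, f1 (sq_lact A a x) = sq_lact B (f0 a) (f1 x);
  sm_ract : forall a x, f1 (sq_ract A x a) = sq_ract B (f1 x) (f0 a);
  sm_supp : forall x, f0 (sq_supp A x) = sq_supp B (f1 x) }.

Record USQ := {
  uq_Q : SupLat;
  uq_mul : uq_Q -> uq_Q -> uq_Q;
  uq_inv : uq_Q -> uq_Q;
  uq_e : uq_Q;
  uq_supp : uq_Q -> uq_Q }.

Record is_USppQu (R : USQ) : Prop := {
  usp_assoc : forall x y z, uq_mul R x (uq_mul R y z) = uq_mul R (uq_mul R x y) z;
  usp_mul_jr : forall x, joinpres (uq_mul R x);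
  usp_mul_jl : forall y, joinpres (fun x => uq_mul R x y);
  usp_unit_l : forall x, uq_mul R (uq_e R) x = x;
  usp_unit_r : forall x, uq_mul R x (uq_e R) = x;
  usp_inv_j : joinpres (uq_inv R);
  usp_inv_inv : forall x, uq_inv R (uq_inv R x) = x;
  usp_inv_mul : forall x y, uq_inv R (uq_mul R x y) = uq_mul R (uq_inv R y) (uq_inv R x);
  usp_supp_j : joinpres (uq_supp R);
  usp_supp_e : forall x, sl_le (uq_supp R x) (uq_e R);
  usp_supp_xx : forall x, sl_le (uq_supp R x) (uq_mul R x (uq_inv R x));
  usp_supp_x : forall x, sl_le x (uq_mul R (uq_supp R x) x) }.

Record USppQu_mor (R S : USQ) (g : uq_Q R -> uq_Q S) : Prop := {
  um_j : joinpres g;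
  um_mul : forall x y, g (uq_mul R x y) = uq_mul S (g x) (g y);
  um_inv : forall x, g (uq_inv R x) = uq_inv S (g x);
  um_unit : g (uq_e R) = uq_e S;
  um_supp : forall x, g (uq_supp R x) = uq_supp S (g x) }.

Section Down.
Variables (L : SupLat) (e : L).

Definition down_sup (S : {x : L | sl_le x e} -> Prop) : {x : L | sl_le x e}.
Proof.
  exists (sl_sup (image (@proj1_sig _ _) S)).
  apply sl_sup_least. intros x [[y Hy] [_ ->]]. exact Hy.
Defined.

Definition downSL : SupLat.
Proof.
  refine (@Build_SupLat {x : L | sl_le x e}
            (fun x y => sl_le (proj1_sig x) (proj1_sig y)) down_sup _ _ _ _ _).
  - intros x; apply sl_refl.
  - intros x y z; apply sl_trans.
  - intros [x px] [y py] H1 H2; simpl in *.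
    assert (x = y) by (apply sl_antisym; assumption). subst y.
    f_equal; apply proof_irrelevance.
  - intros S x Sx; simpl. apply sl_sup_ub. exists x; auto.
  - intros S y H; simpl. apply sl_sup_least. intros x [z [Sz ->]]. apply H, Sz.
Defined.

(** total corestriction  L -> ↓e  (identity on elements below e; junk value e otherwise) *)
Definition todown (x : L) : downSL :=
  match excluded_middle_informative (sl_le x e) with
  | left p => exist (fun y => sl_le y e) x p
  | right _ => exist (fun y => sl_le y e) e (sl_refl _ e)
  end.
End Down.
Arguments downSL {L} e.
Arguments todown {L} e x.
Arguments down_sup {L} e S.

(** * The embedding USppQu -> SppUQu: Q_0 = ↓e, actions = multiplication *)
Definition J (R : USQ) : SQ := {|
  sq_Q := uq_Q R;
  sq_Q0 := downSL (uq_e R);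
  sq_lact := fun (a : downSL (uq_e R)) x => uq_mul R (proj1_sig a) x;
  sq_ract := fun x (a : downSL (uq_e R)) => uq_mul R x (proj1_sig a);
  sq_mul := uq_mul R;
  sq_inv := uq_inv R;
  sq_supp := fun x => todown (uq_e R) (uq_supp R x);
  sq_e := uq_e R |}.

Definition Jmor (R S : USQ) (g : uq_Q R -> uq_Q S) :
  downSL (uq_e R) -> downSL (uq_e S) :=
  fun a => todown (uq_e S) (g (proj1_sig a)).

Definition supp_e (A : SQ) (x : sq_Q A) : sq_Q A := sq_lact A (sq_supp A x) (sq_e A).

Definition reflU (A : SQ) : USQ := {|
  uq_Q := sq_Q A; uq_mul := sq_mul A; uq_inv := sq_inv A;
  uq_e := sq_e A; uq_supp := supp_e A |}.

Definition eta0 (A : SQ) : sq_Q0 A -> downSL (sq_e A) :=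
  fun a => todown (sq_e A) (sq_lact A a (sq_e A)).

(* Main.v *)
Require Import Defs.
From Stdlib Require Import ClassicalEpsilon ProofIrrelevance.
Set Implicit Arguments.

Lemma sup_eq (L:SupLat) (S T : L -> Prop): (forall x, S x -> T x) -> (forall x, T x -> S x) -> sl_sup S = sl_sup T.
Proof. intros H1 H2; apply sl_antisym; apply sl_sup_least; intros x Hx; apply sl_sup_ub; auto. Qed.

Lemma jp_mono (L M:SupLat) (f:L->M) : joinpres f -> forall x y, sl_le x y -> sl_le (f x) (f y).
Proof.
 intros Hf x y Hxy.
 assert (E: sl_sup (fun z => z = x \/ z = y) = y).
 { apply sl_antisym. apply sl_sup_least; intros z [->| ->]; [exact Hxy| apply sl_refl]. apply sl_sup_ub; auto. }
 rewrite <- E, Hf. apply sl_sup_ub. exists x; auto.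
Qed.

Lemma sig_eq (L:SupLat) (e:L) (x y : downSL e) : proj1_sig x = proj1_sig y -> x = y.
Proof. destruct x as [x px], y as [y py]. simpl. intros ->. f_equal. apply proof_irrelevance. Qed.

Lemma todown_val (L:SupLat)(e x:L): sl_le x e -> proj1_sig (todown e x) = x.
Proof. intros h. unfold todown. destruct excluded_middle_informative; [reflexivity|contradiction]. Qed.

Lemma top_ge (L:SupLat) (x:L) : sl_le x (top L).
Proof. apply sl_sup_ub; exact I. Qed.

Lemma down_top (L:SupLat) (e:L) : proj1_sig (top (downSL e)) = e.
Proof. simpl. apply sl_antisym. apply sl_sup_least. intros x [[y py] [_ ->]]; exact py.
 apply sl_sup_ub. exists (exist (fun y => sl_le y e) e (sl_refl _ e)). split; auto. Qed.
Section U.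
Variable R : USQ.
Hypothesis H : is_USppQu R.
Notation m := (uq_mul R). Notation e := (uq_e R). Notation iv := (uq_inv R). Notation sp := (uq_supp R).

Lemma mml x y z : sl_le x y -> sl_le (m x z) (m y z).
Proof. exact (jp_mono (usp_mul_jl H z) x y). Qed.
Lemma mmr x y z : sl_le x y -> sl_le (m z x) (m z y).
Proof. exact (jp_mono (usp_mul_jr H z) x y). Qed.
Lemma ivm x y : sl_le x y -> sl_le (iv x) (iv y).
Proof. exact (jp_mono (usp_inv_j H) x y). Qed.
Lemma spm x y : sl_le x y -> sl_le (sp x) (sp y).
Proof. exact (jp_mono (usp_supp_j H) x y). Qed.

Lemma inv_e : iv e = e.
Proof.
  assert (E: iv (m e (iv e)) = e) by (rewrite (usp_unit_l H), (usp_inv_inv H); reflexivity).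
  rewrite (usp_inv_mul H), (usp_inv_inv H), (usp_unit_l H) in E. exact E.
Qed.

Lemma supp_down a : sl_le a e -> sp a = a.
Proof.
  intros h. apply sl_antisym.
  - eapply sl_trans. apply (usp_supp_xx H). eapply sl_trans. apply mmr. apply ivm, h.
    rewrite inv_e, (usp_unit_r H). apply sl_refl.
  - eapply sl_trans. apply (usp_supp_x H). eapply sl_trans. apply mmr, h.
    rewrite (usp_unit_r H). apply sl_refl.
Qed.

Lemma aai a : sl_le a e -> m a (iv a) = a.
Proof.
  intros h. apply sl_antisym.
  - eapply sl_trans. apply mmr. apply ivm, h. rewrite inv_e, (usp_unit_r H). apply sl_refl.
  - rewrite <- (supp_down a h) at 1. apply (usp_supp_xx H).
Qed.

Lemma inv_down a : sl_le a e -> iv a = a.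
Proof.
  intros h. rewrite <- (aai a h) at 1. rewrite (usp_inv_mul H), (usp_inv_inv H). apply aai, h.
Qed.

Lemma aa a : sl_le a e -> m a a = a.
Proof. intros h. rewrite <- (inv_down a h) at 2. apply aai, h. Qed.

Lemma ab_le_a a b : sl_le b e -> sl_le (m a b) a.
Proof. intros h. eapply sl_trans. apply mmr, h. rewrite (usp_unit_r H). apply sl_refl. Qed.
Lemma ab_le_b a b : sl_le a e -> sl_le (m a b) b.
Proof. intros h. eapply sl_trans. apply mml, h. rewrite (usp_unit_l H). apply sl_refl. Qed.

Lemma down_meet (a b : downSL e) : proj1_sig (meet a b) = m (proj1_sig a) (proj1_sig b).
Proof.
  destruct a as [a pa], b as [b pb]. simpl. apply sl_antisym.
  - apply sl_sup_least. intros x [[c pc] [[h1 h2] ->]]. simpl in *.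
    rewrite <- (aa c pc). eapply sl_trans. apply mml, h1. apply mmr, h2.
  - apply sl_sup_ub.
    assert (p : sl_le (m a b) e) by (eapply sl_trans; [apply ab_le_a, pb| exact pa]).
    exists (exist (fun y => sl_le y e) (m a b) p). simpl. split; [split|reflexivity].
    apply ab_le_a, pb. apply ab_le_b, pa.
Qed.

Lemma down_top_e : proj1_sig (top (downSL e)) = e.
Proof. apply down_top. Qed.

End U.

Ltac memb := match goal with
 | |- image _ _ _ => idtac end.

Lemma J_spp (R : USQ) : is_USppQu R -> is_SppUQu (J R).
Proof.
  intros H. pose proof (usp_assoc H) as AS.
  constructor; cbn [J sq_Q sq_Q0 sq_lact sq_ract sq_mul sq_inv sq_supp sq_e].
  - intros a S. apply sig_eq. rewrite down_meet by exact H. simpl.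
    rewrite (usp_mul_jr H). apply sup_eq.
    + intros y [x [[s [Ss ->]] ->]]. exists (meet a s). split. exists s; auto.
      rewrite down_meet by exact H. reflexivity.
    + intros y [x [[s [Ss ->]] ->]]. rewrite down_meet by exact H.
      exists (proj1_sig s). split; auto. exists s; auto.
  - intros a. exact (usp_mul_jr H _).
  - intros x S. simpl. rewrite (usp_mul_jl H). apply sup_eq.
    + intros y [z [[s [Ss ->]] ->]]. exists s; auto.
    + intros y [s [Ss ->]]. exists (proj1_sig s). split; auto. exists s; auto.
  - intros a. exact (usp_mul_jl H _).
  - intros x S. simpl. rewrite (usp_mul_jr H). apply sup_eq.
    + intros y [z [[s [Ss ->]] ->]]. exists s; auto.
    + intros y [s [Ss ->]]. exists (proj1_sig s). split; auto. exists s; auto.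
  - intros x. rewrite down_top. apply (usp_unit_l H).
  - intros a b x. rewrite down_meet by exact H. symmetry; apply AS.
  - intros x. rewrite down_top. apply (usp_unit_r H).
  - intros a b x. rewrite down_meet by exact H. apply AS.
  - intros a b x. symmetry; apply AS.
  - exact AS.
  - exact (usp_mul_jr H).
  - exact (usp_mul_jl H).
  - intros a x y. symmetry; apply AS.
  - intros a x y. symmetry; apply AS.
  - intros a x y. symmetry; apply AS.
  - exact (usp_inv_j H).
  - exact (usp_inv_inv H).
  - exact (usp_inv_mul H).
  - intros [a pa] [b pb] x. simpl. rewrite (usp_inv_mul H), (usp_inv_mul H), (inv_down H a pa), (inv_down H b pb).
    symmetry; apply AS.
  - intros S. apply sig_eq. rewrite todown_val by apply (usp_supp_e H). simpl.
    rewrite (usp_supp_j H). apply sup_eq.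
    + intros y [x [Sx ->]]. exists (todown (uq_e R) (uq_supp R x)). split. exists x; auto.
      rewrite todown_val by apply (usp_supp_e H). reflexivity.
    + intros y [z [[x [Sx ->]] ->]]. rewrite todown_val by apply (usp_supp_e H). exists x; auto.
  - apply sig_eq. rewrite todown_val by apply (usp_supp_e H). rewrite down_top.
    apply sl_antisym. apply (usp_supp_e H).
    rewrite <- (supp_down H (uq_e R)) at 1 by apply sl_refl. apply (spm H). apply top_ge.
  - intros x y. rewrite todown_val by apply (usp_supp_e H). apply (mml H). apply (usp_supp_xx H).
  - intros x. rewrite todown_val by apply (usp_supp_e H). apply sl_antisym.
    + eapply sl_trans. apply (mml H). apply (usp_supp_e H). rewrite (usp_unit_l H). apply sl_refl.
    + apply (usp_supp_x H).
  - exact (usp_unit_l H).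
  - exact (usp_unit_r H).
Qed.

Lemma mor_down (R S : USQ) (g : uq_Q R -> uq_Q S) : is_USppQu R -> is_USppQu S -> USppQu_mor R S g ->
  forall a, sl_le a (uq_e R) -> sl_le (g a) (uq_e S).
Proof. intros HR HS Hg a h. rewrite <- (um_unit Hg). exact (jp_mono (um_j Hg) _ _ h). Qed.

Lemma Jmor_val (R S : USQ) (g : uq_Q R -> uq_Q S) : is_USppQu R -> is_USppQu S -> USppQu_mor R S g ->
  forall a, proj1_sig (Jmor R S g a) = g (proj1_sig a).
Proof. intros HR HS Hg [a pa]. unfold Jmor. apply todown_val. simpl. eapply mor_down; eauto. Qed.

Lemma J_mor (R S : USQ) (g : uq_Q R -> uq_Q S) :
      is_USppQu R -> is_USppQu S -> USppQu_mor R S g ->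
      SppUQu_mor (J R) (J S) g (Jmor R S g).
Proof.
  intros HR HS Hg.
  constructor; cbn [J sq_Q sq_Q0 sq_lact sq_ract sq_mul sq_inv sq_supp sq_e].
  - exact (um_j Hg).
  - exact (um_mul Hg).
  - exact (um_inv Hg).
  - exact (um_unit Hg).
  - split; [|split].
    + intros T. apply sig_eq. rewrite (Jmor_val HR HS Hg). simpl. rewrite (um_j Hg). apply sup_eq.
      * intros y [z [[s [Ts ->]] ->]]. exists (Jmor R S g s). split. exists s; auto.
        rewrite (Jmor_val HR HS Hg). reflexivity.
      * intros y [z [[s [Ts ->]] ->]]. rewrite (Jmor_val HR HS Hg). exists (proj1_sig s). split; auto. exists s; auto.
    + intros a b. apply sig_eq. rewrite (Jmor_val HR HS Hg), !(down_meet HR), (down_meet HS), !(Jmor_val HR HS Hg).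
      apply (um_mul Hg).
    + apply sig_eq. rewrite (Jmor_val HR HS Hg), !down_top. apply (um_unit Hg).
  - intros a x. rewrite (Jmor_val HR HS Hg). apply (um_mul Hg).
  - intros a x. rewrite (Jmor_val HR HS Hg). apply (um_mul Hg).
  - intros x. apply sig_eq. rewrite (Jmor_val HR HS Hg), !todown_val by (apply usp_supp_e; assumption).
    apply (um_supp Hg).
Qed.

Lemma J_full (R S : USQ) (f1 : sq_Q (J R) -> sq_Q (J S)) (f0 : sq_Q0 (J R) -> sq_Q0 (J S)) :
      is_USppQu R -> is_USppQu S -> SppUQu_mor (J R) (J S) f1 f0 ->
      exists g : uq_Q R -> uq_Q S,
        USppQu_mor R S g /\ (forall x, f1 x = g x) /\ (forall a, f0 a = Jmor R S g a).
Proof.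
  intros HR HS Hf. 
  assert (K : forall a, proj1_sig (f0 a) = f1 (proj1_sig a)).
  { intros a. rewrite <- (usp_unit_r HR (proj1_sig a)).
    change (proj1_sig (f0 a) = f1 (sq_lact (J R) a (sq_e (J R)))).
    rewrite (sm_lact Hf), (sm_unit Hf). simpl. symmetry; apply (usp_unit_r HS). }
  assert (G : USppQu_mor R S f1).
  { constructor.
    - exact (sm_j Hf).
    - exact (sm_mul Hf).
    - exact (sm_inv Hf).
    - exact (sm_unit Hf).
    - intros x. pose proof (sm_supp Hf x) as E. simpl in E.
      apply (f_equal (@proj1_sig _ _)) in E. rewrite K, !todown_val in E by (apply usp_supp_e; assumption).
      exact E. }
  exists f1. split; [exact G|split; [reflexivity|]].
  intros a. apply sig_eq. rewrite (Jmor_val HR HS G). apply K.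
Qed.

Lemma ae_le (A : SQ) (HA : is_SppUQu A) a : sl_le (sq_lact A a (sq_e A)) (sq_e A).
Proof.
  rewrite <- (spp_lact_top HA (sq_e A)) at 2. exact (jp_mono (spp_lact_jl HA (sq_e A)) _ _ (top_ge _ a)).
Qed.

Lemma refl_usp (A : SQ) : is_SppUQu A -> is_USppQu (reflU A).
Proof.
  intros HA. constructor; cbn [reflU uq_Q uq_mul uq_inv uq_e uq_supp].
  - exact (spp_assoc HA).
  - exact (spp_mul_jr HA).
  - exact (spp_mul_jl HA).
  - exact (spp_unit_l HA).
  - exact (spp_unit_r HA).
  - exact (spp_inv_j HA).
  - exact (spp_inv_inv HA).
  - exact (spp_inv_mul HA).
  - intros S. unfold supp_e. rewrite (spp_supp_j HA), (spp_lact_jl HA). apply sup_eq.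
    + intros y [z [[x [Sx ->]] ->]]. exists x; auto.
    + intros y [x [Sx ->]]. exists (sq_supp A x). split; auto. exists x; auto.
  - intros x. apply ae_le, HA.
  - intros x. unfold supp_e. rewrite <- (spp_unit_r HA (sq_mul A x (sq_inv A x))). apply (spp_supp_le HA).
  - intros x. unfold supp_e. rewrite (spp_lact_mul HA), (spp_unit_l HA), (spp_supp_act HA). apply sl_refl.
Qed.

Lemma eta0_val (A : SQ) (HA : is_SppUQu A) a : proj1_sig (eta0 A a) = sq_lact A a (sq_e A).
Proof. unfold eta0. apply todown_val. apply ae_le, HA. Qed.

Lemma eta_mor (A : SQ) : is_SppUQu A -> SppUQu_mor A (J (reflU A)) (fun x => x) (eta0 A).
Proof.
  intros HA. pose proof (refl_usp HA) as HR.
  constructor; cbn [J reflU sq_Q sq_Q0 sq_lact sq_ract sq_mul sq_inv sq_supp sq_e uq_Q uq_mul uq_inv uq_e uq_supp].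
  - intros S. apply sup_eq.
    + intros x Sx. exists x; auto.
    + intros y [x [Sx ->]]. exact Sx.
  - reflexivity.
  - reflexivity.
  - reflexivity.
  - split; [|split].
    + intros T. apply sig_eq. rewrite (eta0_val HA). simpl. rewrite (spp_lact_jl HA). apply sup_eq.
      * intros y [s [Ts ->]]. exists (eta0 A s). split. exists s; auto.
        rewrite (eta0_val HA). reflexivity.
      * intros y [z [[s [Ts ->]] ->]]. rewrite (eta0_val HA). exists s; auto.
    + intros a b. apply sig_eq.
      change (proj1_sig (eta0 A (meet a b)) = proj1_sig (@meet (downSL (uq_e (reflU A))) (eta0 A a) (eta0 A b))).
      rewrite (down_meet HR). cbn [reflU uq_mul]. rewrite !(eta0_val HA), (spp_lact_meet HA), (spp_lact_mul HA), (spp_unit_l HA).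
      reflexivity.
    + apply sig_eq. rewrite (eta0_val HA), (spp_lact_top HA).
      change (sq_e A = proj1_sig (top (downSL (uq_e (reflU A))))). rewrite down_top. reflexivity.
  - intros a x. rewrite (eta0_val HA), (spp_lact_mul HA), (spp_unit_l HA). reflexivity.
  - intros a x. rewrite (eta0_val HA), <- (spp_ract_mul HA), (spp_unit_r HA). reflexivity.
  - intros x. reflexivity.
Qed.

Lemma univ (A : SQ) (HA : is_SppUQu A) (S : USQ) (f1 : sq_Q A -> sq_Q (J S)) (f0 : sq_Q0 A -> sq_Q0 (J S)) :
        is_USppQu S -> SppUQu_mor A (J S) f1 f0 ->
        exists g : uq_Q (reflU A) -> uq_Q S,
          USppQu_mor (reflU A) S g /\
          (forall x, g x = f1 x) /\
          (forall a, Jmor (reflU A) S g (eta0 A a) = f0 a) /\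
          (forall g' : uq_Q (reflU A) -> uq_Q S,
             USppQu_mor (reflU A) S g' ->
             (forall x, g' x = f1 x) ->
             (forall a, Jmor (reflU A) S g' (eta0 A a) = f0 a) ->
             forall x, g' x = g x).
Proof.
  intros HS Hf. pose proof (refl_usp HA) as HR.
  assert (K : forall a, f1 (sq_lact A a (sq_e A)) = proj1_sig (f0 a)).
  { intros a. rewrite (sm_lact Hf), (sm_unit Hf). simpl. apply (usp_unit_r HS). }
  assert (G : USppQu_mor (reflU A) S f1).
  { constructor.
    - exact (sm_j Hf).
    - exact (sm_mul Hf).
    - exact (sm_inv Hf).
    - exact (sm_unit Hf).
    - intros x. cbn [reflU uq_supp]. unfold supp_e. rewrite K, (sm_supp Hf). simpl.
      apply todown_val. apply (usp_supp_e HS). }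
  exists f1. split; [exact G|split; [reflexivity|split]].
  - intros a. apply sig_eq. rewrite (Jmor_val HR HS G), (eta0_val HA). apply K.
  - intros g' _ E _ x. apply E.
Qed.

Theorem lemma3p13 :
  (* USppQu is a subcategory of SppUQu via J (objects and morphisms) *)
  (forall R : USQ, is_USppQu R -> is_SppUQu (J R)) /\
  (forall (R S : USQ) (g : uq_Q R -> uq_Q S),
      is_USppQu R -> is_USppQu S -> USppQu_mor R S g ->
      SppUQu_mor (J R) (J S) g (Jmor R S g)) /\
  (* full *)
  (forall (R S : USQ) (f1 : sq_Q (J R) -> sq_Q (J S)) (f0 : sq_Q0 (J R) -> sq_Q0 (J S)),
      is_USppQu R -> is_USppQu S -> SppUQu_mor (J R) (J S) f1 f0 ->
      exists g : uq_Q R -> uq_Q S,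
        USppQu_mor R S g /\ (forall x, f1 x = g x) /\ (forall a, f0 a = Jmor R S g a)) /\
  (* reflective, with reflection eta = (id, a |-> a |> e) into (Q, varsigma_e) *)
  (forall A : SQ, is_SppUQu A ->
     is_USppQu (reflU A) /\
     SppUQu_mor A (J (reflU A)) (fun x => x) (eta0 A) /\
     (forall (S : USQ) (f1 : sq_Q A -> sq_Q (J S)) (f0 : sq_Q0 A -> sq_Q0 (J S)),
        is_USppQu S -> SppUQu_mor A (J S) f1 f0 ->
        exists g : uq_Q (reflU A) -> uq_Q S,
          USppQu_mor (reflU A) S g /\
          (forall x, g x = f1 x) /\
          (forall a, Jmor (reflU A) S g (eta0 A a) = f0 a) /\
          (forall g' : uq_Q (reflU A) -> uq_Q S,
             USppQu_mor (reflU A) S g' ->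
             (forall x, g' x = f1 x) ->
             (forall a, Jmor (reflU A) S g' (eta0 A a) = f0 a) ->
             forall x, g' x = g x))).
Proof.
  split; [exact J_spp|split; [exact J_mor|split; [exact J_full|]]].
  intros A HA. split; [exact (refl_usp HA)|split; [exact (eta_mor HA)|]].
  intros S f1 f0. apply univ, HA.
Qed.
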